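(* Let $M$ be a Mealy machine, $A$ an NFA over $I_M$, $\sqsubseteq$ a reflexive relation on $S_A$ such that $a\sqsubseteq b$ implies $\mathcal{L}_A(a)\subseteq\mathcal{L}_A(b)$, $E\subseteq\mathcal{L}_A$ a finite prefix-closed set, and $k\in\mathbb{N}$. Suppose that every word $\alpha\in\mathcal{L}_A\setminus E$ has a prefix $\beta\in E$ which is $(k+1)$-saturated. Then $E$ is $k$-complete in the context of $\mathcal{L}_A$: for every Mealy machine $N$ with the same input/output alphabets as $M$ and at most $k$ states, $M\sim_E N$ implies $M\sim_{\mathcal{L}_A}N$.
   Context: Mealy machines $M=(I_M,O_M,S_M,\delta_M,\lambda_M,r_M)$ have $\delta_M,\lambda_M$ extended to words as usual, with $\delta_M(\alpha)=\delta_M(r_M,\alpha)$, $\lambda_M(\alpha)=\lambda_M(r_M,\alpha)$. NFAs $A=(I_M,S_A,\Delta_A,r_A)$ have all states accepting; $\Delta_A(a,\alpha)$ is the set of states reachable from $a$ by a run on $\alpha$, $\Delta_A(\alpha)=\Delta_A(r_A,\alpha)$, $\mathcal{L}_A(a)=\{\alpha:\Delta_A(a,\alpha)\ne\emptyset\}$, $\mathcal{L}_A=\mathcal{L}_A(r_A)$. For a set $V$ of words, $M\sim_V N$ means $\lambda_M(\alpha)=\lambda_N(\alpha)$ for all $\alpha\in V$. Locations $(s,a),(t,b)\in S_M\times S_A$ are incompatible, $(s,a)\nsim(t,b)$, if some $\alpha\in\mathcal{L}_A(a)\cap\mathcal{L}_A(b)$ has $\lambda_M(s,\alpha)\ne\lambda_M(t,\alpha)$.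 Words $\alpha,\beta\in E$ are $E$-separable, $\alpha\,\#_E\,\beta$, if some $\gamma$ has $\alpha\gamma,\beta\gamma\in E$ and $\lambda_M(\delta_M(\alpha),\gamma)\ne\lambda_M(\delta_M(\beta),\gamma)$. The context tree $\Gamma$ is the set of nodes $a/\alpha$ (pairs) with $\alpha\in\mathcal{L}_A$ and $a\in\Delta_A(\alpha)$; for $D\subseteq\mathcal{L}_A$, $\Gamma(D)$ is the set of nodes $a/\alpha$ with $\alpha\in D$. A node $b/\beta$ precedes $a/\alpha$, written $b/\beta\preceq a/\alpha$, if $\alpha=\beta\gamma$ for some $\gamma$ with $a\in\Delta_A(b,\gamma)$. A ranking is a sequence of nodes $(a_j/\alpha_j)_{j=1}^m$ with $\alpha_1<\dots<\alpha_m$ (strict prefixes); it is monotonous if $a_1\sqsupseteq a_2\sqsupseteq\dots\sqsupseteq a_m$. $E$ is incompatibility-preserving w.r.t. a set of nodes $R\subseteq\Gamma(E)$ if for all $a/\alpha,b/\beta\in R$ with $(\delta_M(\alpha),a)\nsim(\delta_M(\beta),b)$ we have $\alpha\,\#_E\,\beta$. A node $a/\alpha$ is $k$-saturated if there is a monotonous ranking $R\subseteq\Gamma(E)$ with $|R|=k$, $b/\beta\preceq a/\alpha$ for all $b/\beta\in R$, and $E$ incompatibility-preserving w.r.t. $R$. A word $\alpha\in\mathcal{L}_A$ is $k$-saturated if every node $a/\alpha$ with $a\in\Delta_A(\alpha)$ is $k$-saturated. *)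

(* Defs.v *)
From mathcomp Require Import all_boot all_order.
Set Implicit Arguments.
Unset Strict Implicit.
Unset Printing Implicit Defensive.

Record mealy (I O : finType) := Mealy {
  mstate : finType;
  mdelta : mstate -> I -> mstate;
  mlambda : mstate -> I -> O;
  minit : mstate }.
Arguments mdelta {I O} m : rename.
Arguments mlambda {I O} m : rename.
Arguments minit {I O} m : rename.

Section Mealy.
Variables (I O : finType) (M : mealy I O).

Fixpoint mdeltaw (s : mstate M) (w : seq I) : mstate M :=
  match w with [::] => s | x :: w' => mdeltaw (mdelta M s x) w' end.

Fixpoint mlambdaw (s : mstate M) (w : seq I) : seq O :=
  match w with
  | [::] => [::]
  | x :: w' => mlambda M s x :: mlambdaw (mdelta M s x) w'
  end.

Definition mdelta0 (w : seq I) := mdeltaw (minit M) w.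
Definition mlambda0 (w : seq I) := mlambdaw (minit M) w.
End Mealy.
Arguments mdeltaw {I O} M.
Arguments mlambdaw {I O} M.
Arguments mdelta0 {I O} M.
Arguments mlambda0 {I O} M.

Definition mequiv_on (I O : finType) (M N : mealy I O) (V : seq I -> Prop) :=
  forall w, V w -> mlambda0 M w = mlambda0 N w.

(** NFAs with all states accepting. *)
Record nfa (I : finType) := NFA {
  astate : finType;
  atrans : astate -> I -> astate -> bool;
  ainit : astate }.
Arguments atrans {I} n : rename.
Arguments ainit {I} n : rename.

Section NFA.
Variables (I : finType) (A : nfa I).

Fixpoint reach (a : astate A) (w : seq I) (b : astate A) : Prop :=
  match w with
  | [::] => a = b
  | x :: w' => exists c, atrans A a x c /\ reach c w' b
  end.

Definition lang (a : astate A) (w : seq I) : Prop := exists b, reach a w b.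
Definition Lang (w : seq I) : Prop := lang (ainit A) w.
End NFA.
Arguments reach {I} A.
Arguments lang {I} A.
Arguments Lang {I} A.

Section Saturation.
Variables (I O : finType) (M : mealy I O) (A : nfa I).
Variable sq : rel (astate A).
Variable E : seq (seq I).

Definition incompatible (s : mstate M) (a : astate A) (t : mstate M) (b : astate A) :=
  exists w, lang A a w /\ lang A b w /\ mlambdaw M s w <> mlambdaw M t w.

Definition Esep (al be : seq I) :=
  al \in E /\ be \in E /\
  exists g, (al ++ g) \in E /\ (be ++ g) \in E /\
    mlambdaw M (mdelta0 M al) g <> mlambdaw M (mdelta0 M be) g.

(** nodes are pairs (a, alpha) standing for a/alpha *)
Definition node := (astate A * seq I)%type.

Definition in_Gamma (D : seq I -> Prop) (n : node) :=
  D n.2 /\ Lang A n.2 /\ reach A (ainit A) n.2 n.1.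

Definition precedes (nb na : node) :=
  exists g, na.2 = nb.2 ++ g /\ reach A nb.1 g na.1.

Definition strict_prefix (u v : seq I) := prefix u v && (u != v).

Definition ranking (R : seq node) := sorted (fun x y => strict_prefix x.2 y.2) R.

Definition monotonous (R : seq node) := sorted (fun x y => sq y.1 x.1) R.

Definition incompat_preserving (R : seq node) :=
  forall na nb, na \in R -> nb \in R ->
    incompatible (mdelta0 M na.2) na.1 (mdelta0 M nb.2) nb.1 ->
    Esep na.2 nb.2.

Definition node_saturated (k : nat) (n : node) :=
  exists R : seq node,
    [/\ ranking R /\ monotonous R,
        (forall x, x \in R -> in_Gamma (fun w => w \in E) x),
        size R = k,
        (forall x, x \in R -> precedes x n)
      & incompat_preserving R].

Definition word_saturated (k : nat) (al : seq I) :=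
  Lang A al /\ forall a, reach A (ainit A) al a -> node_saturated k (a, al).
End Saturation.

(* Main.v *)
Require Import Defs.
From mathcomp Require Import all_boot all_order.
From Stdlib Require Import Classical.
Set Implicit Arguments.
Unset Strict Implicit.

Lemma catK_l (T : Type) (s u v : seq T) : s ++ u = s ++ v -> u = v.
Proof. by elim: s => //= x s IH [] /IH. Qed.

Lemma mdeltaw_cat (I O : finType) (M : mealy I O) s u v :
  mdeltaw M s (u ++ v) = mdeltaw M (mdeltaw M s u) v.
Proof. by elim: u s => //= x u IH s; rewrite IH. Qed.

Lemma mlambdaw_cat (I O : finType) (M : mealy I O) s u v :
  mlambdaw M s (u ++ v) = mlambdaw M s u ++ mlambdaw M (mdeltaw M s u) v.
Proof. by elim: u s => //= x u IH s; rewrite IH. Qed.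

Lemma reach_cat (I : finType) (A : nfa I) a u v b :
  reach A a (u ++ v) b <-> exists c, reach A a u c /\ reach A c v b.
Proof.
elim: u a => [|x u IH] a /=.
  by split=> [H|[c [-> H]]] //; exists a.
split=> [[c [Hac /IH [d [H1 H2]]]]|[d [[c [Hac Hcd]] Hdb]]].
  by exists d; split => //; exists c.
by exists c; split => //; apply/IH; exists d.
Qed.

Lemma path_head_P (T : Type) (r : T -> T -> bool) (P : T -> T -> Prop)
  (Ptr : forall x y z, P x y -> P y z -> P x z) (rP : forall x y, r x y -> P x y)
  x0 s : forall a, path r a s -> forall j, j < size s -> P a (nth x0 s j).
Proof.
elim: s => [|b s IH] a //= /andP [Hab Hp] [|j] //= Hj.
  by apply: rP.
by apply: (Ptr _ b); [apply: rP | apply: IH].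
Qed.

Lemma sorted_P (T : Type) (r : T -> T -> bool) (P : T -> T -> Prop)
  (Ptr : forall x y z, P x y -> P y z -> P x z) (rP : forall x y, r x y -> P x y)
  x0 s : sorted r s -> forall i j, i < j -> j < size s -> P (nth x0 s i) (nth x0 s j).
Proof.
elim: s => [|a s IH] //= Hp [|i] [|j] //= Hij Hj.
  by apply: (path_head_P Ptr rP x0 Hp).
have Hs : sorted r s by move: Hp; case: (s) => //= b s1 /andP [].
have Hij2 : i < j by [].
have Hj2 : j < size s by [].
exact: (IH Hs i j Hij2 Hj2).
Qed.

Theorem theorem2 (I O : finType) (M : mealy I O) (A : nfa I)
  (sq : rel (astate A))
  (sq_refl : reflexive sq)
  (sq_lang : forall a b, sq a b -> forall w, lang A a w -> lang A b w)
  (E : seq (seq I))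
  (E_lang : forall w, w \in E -> Lang A w)
  (E_prefix_closed : forall u v, (u ++ v) \in E -> u \in E)
  (k : nat)
  (Hsat : forall al, Lang A al -> al \notin E ->
     exists2 be, prefix be al & be \in E /\ word_saturated M sq E k.+1 be) :
  forall N : mealy I O, #|mstate N| <= k ->
    mequiv_on M N (fun w => w \in E) -> mequiv_on M N (Lang A).
Proof.
move=> N HN HE.
have catE : forall u g, u ++ g \in E -> u \in E ->
    mlambdaw M (mdelta0 M u) g = mlambdaw N (mdelta0 N u) g.
  move=> u g Hug Hu; have := HE _ Hug; rewrite /mlambda0 !mlambdaw_cat.
  by rewrite -/(mlambda0 M u) -/(mlambda0 N u) (HE _ Hu) => /catK_l.
suff H : forall n al, size al <= n -> Lang A al -> mlambda0 M al = mlambda0 N al.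
  by move=> al; apply: (H (size al)).
elim=> [|n IH] al Hs HL.
  by case: al Hs HL.
case HalE: (al \in E); first by apply: HE.
have [be /prefixP [rho Hal] [HbE [_ Hws]]] := Hsat al HL (negbT HalE).
move: HL; rewrite /Lang /lang Hal => -[b /reach_cat [a [Hba Hrho]]].
have [R [[Hrk Hmon] HG HsR Hprec Hip]] := Hws a Hba.
set x0 := (a, be).
pose f (i : 'I_k.+1) := mdelta0 N (nth x0 R i).2.
have : ~ injective f.
  move=> /leq_card; rewrite card_ord => H1.
  by have := leq_trans H1 HN; rewrite ltnn.
move=> Hni; have [i Hi] := not_all_ex_not _ _ Hni.
have [j Hj] := not_all_ex_not _ _ Hi.
have [Hfij Hij] := imply_to_and _ _ Hj.
clear Hni Hi Hj.
have Hgen : forall i j : 'I_k.+1, i < j -> f i = f j ->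
    mlambda0 M al = mlambda0 N al.
  move=> {Hfij Hij} i0 j0 Hij Hfij; move: i0 j0 Hij Hfij; clear i j => i j Hij Hfij.
  have HiR : i < size R by rewrite HsR.
  have HjR : j < size R by rewrite HsR.
  set ni := nth x0 R i; set nj := nth x0 R j.
  have Hsz : size ni.2 < size nj.2.
    apply: (sorted_P (r := fun x y => strict_prefix x.2 y.2)
              (P := fun x y => size x.2 < size y.2)) => //.
      by move=> x y z; apply: ltn_trans.
    move=> x y /andP [/prefixP [s ->] Hne]; rewrite size_cat -[X in X < _]addn0 ltn_add2l.
    by case: s Hne => //; rewrite cats0 eqxx.
  have Hincl : forall w, lang A nj.1 w -> lang A ni.1 w.
    apply: (sorted_P (r := fun x y => sq y.1 x.1)
              (P := fun x y => forall w, lang A y.1 w -> lang A x.1 w)) => //.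
    by move=> x y z Hxy Hyz w /Hyz /Hxy.
    by move=> x y /sq_lang.
  have [Hi1 [_ Hi3]] := HG _ (mem_nth x0 HiR).
  have [Hj1 [_ Hj3]] := HG _ (mem_nth x0 HjR).
  have [gj [Hbej Hrj]] := Hprec _ (mem_nth x0 HjR).
  rewrite /= -/nj in Hbej Hrj.
  set gam := gj ++ rho.
  have Halj : al = nj.2 ++ gam by rewrite Hal Hbej catA.
  have Hlj : lang A nj.1 gam by exists b; apply/reach_cat; exists a.
  have Hli : lang A ni.1 gam by apply: Hincl.
  have Hcomp : mlambdaw M (mdelta0 M ni.2) gam = mlambdaw M (mdelta0 M nj.2) gam.
    case: (eqVneq (mlambdaw M (mdelta0 M ni.2) gam) (mlambdaw M (mdelta0 M nj.2) gam)) => // Hne.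
    have [_ [_ [g [Hig [Hjg Hneg]]]]] :=
      Hip _ _ (mem_nth x0 HiR) (mem_nth x0 HjR) (ex_intro _ gam (conj Hli (conj Hlj (elimN eqP Hne)))).
    exfalso; apply: Hneg.
    by rewrite (catE _ _ Hig Hi1) (catE _ _ Hjg Hj1); have := Hfij; rewrite /f -/ni -/nj => ->.
  clearbody gam.
  have Hal' : mlambda0 M (ni.2 ++ gam) = mlambda0 N (ni.2 ++ gam).
    apply: IH.
      move: Hs; rewrite Halj !size_cat => Hs.
      by rewrite -ltnS (leq_trans _ Hs) // ltn_add2r.
    have [c Hc] := Hli; exists c; apply/reach_cat; by exists ni.1.
  move: Hal'; rewrite /mlambda0 !mlambdaw_cat -/(mlambda0 M ni.2) -/(mlambda0 N ni.2).
  rewrite (HE _ Hi1) => /catK_l Hg.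
  rewrite Halj !mlambdaw_cat -/(mlambda0 M nj.2) -/(mlambda0 N nj.2) (HE _ Hj1).
  congr (_ ++ _); rewrite -Hcomp Hg.
  by have := Hfij; rewrite /f -/ni -/nj /mdelta0 => ->.
rewrite -Hal.
case: (ltngtP i j) => Hlt.
- exact: Hgen Hlt Hfij.
- exact: Hgen Hlt (esym Hfij).
- by exfalso; apply: Hij; apply: val_inj.
Qed.
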